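(* In the setting described in the context, with $\mathsf{LP}=\sum_{i\in\mathcal F,j\in\mathcal C}x_{i,j}d(i,j)$, $$\sum_{v\in\mathcal C^*}\ \sum_{i\in\mathcal U_v}\ \sum_{j\in\mathcal C,\,j\neq v}x_{i,j}\,d(j,v)\ \le\ 2(\ell+1)\,\mathsf{LP}.$$
   Context: Setting: finite sets $\mathcal F$ (facility locations) and $\mathcal C$ (clients), a metric $d$ on $\mathcal F\cup\mathcal C$, positive integers $k,u,\ell$, and real numbers $x_{i,j}\ge0$, $y_i\ge0$ with $\sum_{i\in\mathcal F}x_{i,j}=1$ for all $j\in\mathcal C$, $\sum_iy_i\le k$, $x_{i,j}\le y_i$, $\sum_jx_{i,j}\le uy_i$. Let $d_{av}(j)=\sum_{i\in\mathcal F}x_{i,j}d(i,j)$. Construction of $\mathcal C^*$: start with $\mathcal C^*=\emptyset$ and $R=\mathcal C$; while $R\ne\emptyset$, choose $v\in R$ with smallest $d_{av}(v)$, add $v$ to $\mathcal C^*$, and remove from $R$ all $j\in R$ with $d(j,v)\le2\ell d_{av}(j)$. Each $i\in\mathcal F$ is put into $\mathcal U_v$ for one $v\in\mathcal C^*$ closest to $i$ (ties arbitrary), so $\{\mathcal U_v\}$ partitions $\mathcal F$. (The left-hand side is the cost of moving, for every $v\in\mathcal C^*$, $i\in\mathcal U_v$, $j\ne v$, $x_{i,j}$ units of demand from $j$ to $v$.) *)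

(* Defs.v *)
From mathcomp Require Import all_boot all_order all_algebra.
Set Implicit Arguments. Unset Strict Implicit. Unset Printing Implicit Defensive.
Import Order.TTheory GRing.Theory Num.Theory.
Local Open Scope ring_scope.

Section Defs.
Variables (R : realFieldType) (Fac Cli : finType).
Notation P := (Fac + Cli)%type.

(* d is a metric on F ∪ C (pseudometric: we do not need d x y = 0 -> x = y). *)
Definition is_metric (d : P -> P -> R) : Prop :=
  [/\ forall p q, 0 <= d p q,
      forall p, d p p = 0,
      forall p q, d p q = d q p &
      forall p q r, d p r <= d p q + d q r].

Definition lp_feasible (k u : nat) (x : Fac -> Cli -> R) (y : Fac -> R) : Prop :=
  [/\ (forall i j, 0 <= x i j), (forall i, 0 <= y i),
      (forall j, \sum_(i : Fac) x i j = 1),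
      \sum_(i : Fac) y i <= k%:R &
      [/\ forall i j, x i j <= y i &
          forall i, \sum_(j : Cli) x i j <= u%:R * y i]].

Definition d_av (d : P -> P -> R) (x : Fac -> Cli -> R) (j : Cli) : R :=
  \sum_(i : Fac) x i j * d (inl i) (inr j).

Definition LPval (d : P -> P -> R) (x : Fac -> Cli -> R) : R :=
  \sum_(i : Fac) \sum_(j : Cli) x i j * d (inl i) (inr j).

(* Clients still in R after the centres in s have been chosen: j is removed
   by v when d(j,v) <= 2 l d_av(j). *)
Definition remaining (l : nat) (d : P -> P -> R) (x : Fac -> Cli -> R)
  (s : seq Cli) : {set Cli} :=
  [set j | all (fun v => 2%:R * l%:R * d_av d x j < d (inr j) (inr v)) s].

(* s = [v_1; ...; v_m] is a possible run (in order of choice) of the greedy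
   construction of C*: each v_k is an element of the current R with smallest
   d_av (ties arbitrary), and the process stops when R is empty. *)
Definition greedy_run (l : nat) (d : P -> P -> R) (x : Fac -> Cli -> R)
  (s : seq Cli) : Prop :=
  (forall n : nat, (n < size s)%N ->
     forall v0 : Cli, let v := nth v0 s n in
       v \in remaining l d x (take n s) /\
       (forall j, j \in remaining l d x (take n s) -> d_av d x v <= d_av d x j))
  /\ remaining l d x s = set0.

(* sigma i = the v in C* with i in U_v, chosen among the closest centres. *)
Definition closest_assignment (d : P -> P -> R) (s : seq Cli)
  (sigma : Fac -> Cli) : Prop :=
  forall i, sigma i \in s /\ (forall v, v \in s -> d (inl i) (inr (sigma i)) <= d (inl i) (inr v)).

End Defs.

(* Main.v *)
Require Import Defs.
From mathcomp Require Import all_boot all_order all_algebra.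
From mathcomp Require Import lra.
Import Order.TTheory GRing.Theory Num.Theory.
Local Open Scope ring_scope.

Theorem lemma1 (R : realFieldType) (Fac Cli : finType)
  (d : (Fac + Cli)%type -> (Fac + Cli)%type -> R)
  (k u l : nat) (x : Fac -> Cli -> R) (y : Fac -> R)
  (Cstar : seq Cli) (sigma : Fac -> Cli) :
  is_metric d ->
  (0 < k)%N -> (0 < u)%N -> (0 < l)%N ->
  lp_feasible k u x y ->
  greedy_run l d x Cstar ->
  closest_assignment d Cstar sigma ->
  \sum_(v <- Cstar) \sum_(i : Fac | sigma i == v) \sum_(j : Cli | j != v)
      x i j * d (inr j) (inr v)
    <= 2%:R * (l%:R + 1) * LPval d x.
Proof.
move=> [d0 dd dC dT] _ _ _ [x0 _ x1 _ _] [gr grE] cl.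
have dav0 j : 0 <= d_av d x j.
  by apply: sumr_ge0 => i _; rewrite mulr_ge0.
have uC : uniq Cstar.
  case: Cstar gr grE cl => [|c0 s] gr _ _; first by [].
  apply/(uniqP c0) => a b; rewrite !inE => Ha Hb Hab.
  wlog lt_ab : a b Ha Hb Hab / (a < b)%N.
    move=> W; case: (ltngtP a b) => h; first exact: W.
      by apply/esym/W.
    by [].
  have [Hr _] := gr b Hb c0.
  move: Hr; rewrite inE => /allP /(_ (nth c0 (c0 :: s) a)).
  have -> : nth c0 (c0 :: s) a \in take b (c0 :: s).
    by rewrite -(nth_take c0 lt_ab) mem_nth // size_take; case: ifP => // /negbT; rewrite -leqNgt => h2; exact: leq_trans lt_ab h2.
  move=> /(_ isT); rewrite Hab dd ltNge.
  by rewrite mulr_ge0 // mulr_ge0 // ler0n.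
have key i j : d (inr j) (inr (sigma i)) <= 2%:R * d (inl i) (inr j) + 2%:R * l%:R * d_av d x j.
  have : j \notin remaining l d x Cstar by rewrite grE inE.
  rewrite inE => /allPn [v' v'C]; rewrite -leNgt => hv'.
  have [_ hcl] := cl i.
  have h1 := hcl v' v'C.
  have h2 := dT (inl i) (inr j) (inr v').
  have h3 := dT (inr j) (inl i) (inr (sigma i)).
  rewrite (dC (inr j) (inl i)) in h3.
  lra.
pose h i := \sum_(j : Cli) x i j * (2%:R * d (inl i) (inr j) + 2%:R * l%:R * d_av d x j).
apply: (@le_trans _ _ (\sum_(v <- Cstar) \sum_(i : Fac | sigma i == v) h i)).
  apply: ler_sum => v _; apply: ler_sum => i /eqP <-.
  apply: (@le_trans _ _ (\sum_(j : Cli) x i j * d (inr j) (inr (sigma i)))).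
    rewrite [X in _ <= X](bigID (fun j => j != sigma i)) /= lerDl.
    by apply: sumr_ge0 => j _; rewrite mulr_ge0.
  by apply: ler_sum => j _; rewrite ler_wpM2l.
rewrite big_uniq //= (eq_bigr (fun v => \sum_(i | true && (sigma i == v)) h i)) //.
rewrite -(partition_big sigma (fun v => v \in Cstar)); last first.
  by move=> i _; have [] := cl i.
rewrite /h.
rewrite (eq_bigr (fun i => \sum_j (2%:R * (x i j * d (inl i) (inr j)) + 2%:R * l%:R * (x i j * d_av d x j)))); last first.
  by move=> i _; apply: eq_bigr => j _; rewrite mulrDr; congr (_ + _); rewrite mulrCA // mulrCA.
have -> : forall f g : Fac -> Cli -> R, \sum_i \sum_j (f i j + g i j) = \sum_i \sum_j f i j + \sum_i \sum_j g i j.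
  by move=> f g; rewrite -big_split; apply: eq_bigr => i _; rewrite big_split.
have E : forall c (f : Fac -> Cli -> R), \sum_i \sum_j c * f i j = c * \sum_i \sum_j f i j.
  by move=> c f; rewrite mulr_sumr; apply: eq_bigr => i _; rewrite mulr_sumr.
rewrite !E.
have -> : \sum_i \sum_j x i j * d_av d x j = LPval d x.
  rewrite /LPval [LHS]exchange_big [RHS]exchange_big /=; apply: eq_bigr => j _.
  by rewrite -mulr_suml x1 mul1r.
rewrite /LPval; lra.
Qed.
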